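(* Let $\eta\in(0,1)$, $B_1,\dots,B_H>0$, and reward functions $r_h:\mathcal{X}_h\times\mathcal{A}\to[-B_h,B_h]$ for $h\in[H]$. Define the extended rewards $\bar r_h(x,a)=r_h(x,a)$ for $(x,a)\in\mathcal{X}_h\times\mathcal{A}$ and $\bar r_h(x,a)=0$ if $x=\mathfrak{t}_h$ or $a=\mathfrak{a}$. Then $$\sup_{\pi\in\bar\Pi_\eta}\bar{\mathbb{E}}^\pi\Big[\sum_{h=1}^H\bar r_h(x_h,a_h)\Big]\ge\sup_{\pi\in\bar\Pi_{\mathrm{M}}}\bar{\mathbb{E}}^\pi\Big[\sum_{h=1}^H\bar r_h(x_h,a_h)\Big]-2Hd^{3/2}\eta\sum_{h=1}^HB_h,$$ where $\bar{\mathbb{E}}^\pi$ denotes expectation over trajectories of $\bar{\mathcal{M}}$ under $\pi$.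
   Context: Setting (Low-Rank MDP). Fix horizon $H\in\mathbb{N}$, dimension $d\in\mathbb{N}$, a finite action set $\mathcal{A}$ with $|\mathcal{A}|=A$, and a measurable state space $\mathcal{X}=\mathcal{X}_1\sqcup\cdots\sqcup\mathcal{X}_H$ (disjoint layers) carrying a $\sigma$-finite measure $\nu$. The MDP $\mathcal{M}$ has an initial distribution $\rho$ on $\mathcal{X}_1$ and, for each $h\in[H-1]$, measurable maps $\phi^\star_h:\mathcal{X}_h\times\mathcal{A}\to\mathbb{R}^d$ and $\mu^\star_{h+1}:\mathcal{X}_{h+1}\to\mathbb{R}^d$ such that for every $(x,a)\in\mathcal{X}_h\times\mathcal{A}$ the function $x'\mapsto\mu^\star_{h+1}(x')^\top\phi^\star_h(x,a)$ is a probability density w.r.t. $\nu$ on $\mathcal{X}_{h+1}$; this density is the transition kernel $T_h(\cdot\mid x,a)$. Normalization: $\|\phi^\star_h(x,a)\|\le 1$ for all $h,x,a$, and $\|\int_{\mathcal{X}_h}\mu^\star_h(x)g(x)\,d\nu(x)\|\le\sqrt d$ for every measurable $g:\mathcal{X}_h\to[0,1]$. $\|\cdot\|$ is the Euclidean norm. Extended MDP $\bar{\mathcal{M}}$: add terminal states $\mathfrak{t}_1,\dots,\mathfrak{t}_H$ (with $\bar{\mathcal{X}}_h=\mathcal{X}_h\cup\{\mathfrak{t}_h\}$) and a terminal action $\mathfrak{a}$ (with $\bar{\mathcal{A}}=\mathcal{A}\cup\{\mathfrak{a}\}$). Transitions from $(x,a)\in\mathcal{X}_h\times\mathcal{A}$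 are as in $\mathcal{M}$; taking $\mathfrak{a}$ in any state of layer $h$, or any action in $\mathfrak{t}_h$, leads deterministically to $\mathfrak{t}_{h+1}$; the initial distribution is $\rho$. The base measure is $\bar\nu=\nu+\sum_h\delta_{\mathfrak{t}_h}$, and for $x\in\bar{\mathcal{X}}_h$, $\bar d^\pi(x)$ is the density w.r.t. $\bar\nu$ of the law of $x_h$ under $\pi$ in $\bar{\mathcal{M}}$. $\bar\Pi_{\mathrm{M}}$ is the set of randomized Markov policies of $\bar{\mathcal{M}}$ (with $\pi(\mathfrak{t}_h)=\mathfrak{a}$). Reachable states: for $h\ge2$ and $\Pi'\subseteq\bar\Pi_{\mathrm{M}}$, $\mathcal{X}_{h,\eta}(\Pi'):=\{x\in\mathcal{X}_h:\exists\pi\in\Pi',\ \bar d^\pi(x)\ge\eta\|\mu^\star_h(x)\|\}$; by convention $\mathcal{X}_{1,\eta}(\Pi')=\mathcal{X}_1$. Truncated policy class: $\bar\Pi_{0,\eta}=\bar\Pi_{\mathrm{M}}$ and for $h\ge1$, $\pi\in\bar\Pi_{h,\eta}$ iff there exists $\pi'\in\bar\Pi_{h-1,\eta}$ with $\pi(x)=\pi'(x)$ for all $x$ in layers $t\neq h$, and for $x\in\mathcal{X}_h$: $\pi(x)=\pi'(x)$ if $x\in\mathcal{X}_{h,\eta}(\bar\Pi_{h-1,\eta})$ and $\pi(x)=\mathfrak{a}$ otherwise (and $\pi(\mathfrak{t}_h)=\mathfrak{a}$). Set $\bar\Pi_\eta:=\bar\Pi_{H,\eta}$. *)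

(* Defs.v *)
From HB Require Import structures.
From mathcomp Require Import all_boot all_order all_algebra.
From mathcomp Require Import all_classical all_reals all_analysis.
Unset Implicit Arguments.
Unset Strict Implicit.
Unset Printing Implicit Defensive.
Import Order.TTheory GRing.Theory Num.Theory.
Import numFieldNormedType.Exports.
Local Open Scope classical_set_scope.
Local Open Scope ring_scope.

(* Layers are indexed by h : nat; layer h is the measurable type X h (only
   h = 1..H are used).  The extended MDP is encoded without new types:
   the terminal state t_h is "the trajectory has stopped before layer h"
   and the terminal action is [None : option A]. *)

Section Vectors.
Context {R : realType} {dim : nat}.
Definition dotv (u v : 'I_dim -> R) : R := \sum_(i < dim) u i * v i.
Definition enorm (u : 'I_dim -> R) : R := Num.sqrt (\sum_(i < dim) u i ^+ 2).
End Vectors.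

Section LowRankMDP.
Context {R : realType} {dX : nat -> measure_display}
  {X : forall h : nat, measurableType (dX h)} {A : finType} {dim : nat}.
Context (nu : forall h, {measure set (X h) -> \bar R})
        (rho : probability (X 1) R)
        (phi : forall h, X h -> A -> 'I_dim -> R)
        (mu : forall h, X h -> 'I_dim -> R).

(* A (randomized Markov) policy of the extended MDP: at layer h, in a
   non-terminal state x, pi h x b is the probability of action b : option A
   (None = the terminal action).  In terminal states the terminal action is
   forced, so nothing needs to be specified there. *)
Definition policy := forall h : nat, X h -> option A -> R.

Definition markov_policy (pi : policy) : Prop :=
  forall h : nat,
    (forall x b, 0 <= pi h x b) /\ (forall x, \sum_(b : option A) pi h x b = 1) /\
    (forall b, measurable_fun setT (fun x => pi h x b)).

Definition trans_dens (h : nat) (x : X h) (a : A) (y : X h.+1) : R :=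
  dotv (mu h.+1 y) (phi h x a).

(* one step of the extended chain under pi: for f on layer h+1,
   (Pstep pi h f) x = E[ f(x_{h+1}) 1{x_{h+1} non-terminal} | x_h = x ] *)
Definition Pstep (pi : policy) (h : nat) (f : X h.+1 -> R) : X h -> R :=
  fun x => \sum_(a : A) pi h x (Some a) *
             Rintegral (nu h.+1) setT (fun y => f y * trans_dens h x a y).

(* Eaux pi k f = \bar E^pi [ f(x_{k+1}) 1{x_{k+1} \in X_{k+1}} ] *)
Fixpoint Eaux (pi : policy) (k : nat) : (X k.+1 -> R) -> R :=
  match k as k0 return (X k0.+1 -> R) -> R with
  | 0 => fun f => Rintegral rho setT f
  | k'.+1 => fun f => Eaux pi k' (Pstep pi k'.+1 f)
  end.

(* expected reward \bar E^pi [ \sum_{h=1}^H \bar r_h(x_h, a_h) ], where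
   \bar r_h = r_h on X_h x A and 0 at terminal states / terminal action *)
Definition value (H : nat) (r : forall h, X h -> A -> R) (pi : policy) : R :=
  \sum_(1 <= h < H.+1)
    match h as h0 return (X h0 -> A -> R) -> R with
    | 0 => fun _ => 0
    | k.+1 => fun rk => Eaux pi k (fun x => \sum_(a : A) pi k.+1 x (Some a) * rk x a)
    end (r h).

(* density \bar d^pi(x) w.r.t. nu of the law of x_{k+2}, at x in X_{k+2}:
   mu*_{k+2}(x)^T \bar E^pi[ phi*_{k+1}(x_{k+1}, a_{k+1}) 1{x_{k+1}, a_{k+1} non-terminal} ] *)
Definition occ_dens (pi : policy) (k : nat) (x : X k.+2) : R :=
  dotv (mu k.+2 x)
       (fun i => Eaux pi k (fun y => \sum_(a : A) pi k.+1 y (Some a) * phi k.+1 y a i)).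

(* reachable states X_{h,eta}(Pi') (X_{1,eta} = X_1 by convention) *)
Definition reachable (eta : R) (Pi' : set policy) (h : nat) : set (X h) :=
  match h as h0 return set (X h0) with
  | k.+2 => [set x | exists2 pi, Pi' pi & eta * enorm (mu k.+2 x) <= occ_dens pi k x]
  | _ => setT
  end.

Definition term_act : option A -> R := fun b => if b is None then 1 else 0.

Fixpoint trunc_class (eta : R) (h : nat) : set policy :=
  match h with
  | 0 => markov_policy
  | k.+1 => [set pi | exists2 pi', trunc_class eta k pi' &
              (forall t : nat, t <> k.+1 -> pi t = pi' t) /\
              (forall x : X k.+1,
                  (reachable eta (trunc_class eta k) k.+1 x -> pi k.+1 x = pi' k.+1 x) /\
                  (~ reachable eta (trunc_class eta k) k.+1 x -> pi k.+1 x = term_act))]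
  end.

End LowRankMDP.

(* Main.v *)
Require Import Defs.
From HB Require Import structures.
From mathcomp Require Import all_boot all_order all_algebra.
From mathcomp Require Import all_classical all_reals all_analysis.
Import Order.TTheory GRing.Theory Num.Theory.
Import numFieldNormedType.Exports.
Local Open Scope classical_set_scope.
Local Open Scope ring_scope.
From mathcomp Require Import measurable_realfun.
From mathcomp Require Import ring lra.
From mathcomp Require Import zify.
Lemma sum_option (R : nmodType) (A : finType) (F : option A -> R) :
  \sum_(b : option A) F b = F None + \sum_(a : A) F (Some a).
Proof.
rewrite (bigD1 None) //=; congr (_ + _).
rewrite (reindex_omap Some id); last by case.
by apply: eq_bigl => a; rewrite eqxx.
Qed.

Lemma comp_le_enorm (R : realType) (dim : nat) (u : 'I_dim -> R) c :
  `|u c| <= enorm u.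
Proof.
rewrite /enorm -sqrtr_sqr ler_sqrt; last by apply: sumr_ge0 => i _; exact: sqr_ge0.
rewrite (bigD1 c) //= lerDl; apply: sumr_ge0 => i _; exact: sqr_ge0.
Qed.

Lemma enorm_le_l1 (R : realType) (dim : nat) (u : 'I_dim -> R) :
  enorm u <= \sum_c `|u c|.
Proof.
have h0 : 0 <= \sum_c `|u c| by apply: sumr_ge0 => i _.
rewrite /enorm -(ger0_norm h0) -sqrtr_sqr ler_sqrt; last exact: sqr_ge0.
rewrite expr2 mulr_suml; apply: ler_sum => i _.
rewrite -[u i ^+ 2]ger0_norm ?sqr_ge0 // expr2 normrM ler_wpM2l //.
by rewrite (bigD1 i) //= lerDl; apply: sumr_ge0.
Qed.
Section Gen.
Context d (T : measurableType d) (R : realType) (m : {measure set T -> \bar R}).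

Lemma integrable_sumR (I : Type) (s : seq I) (F : I -> T -> R) :
  (forall i, m.-integrable setT (EFin \o F i)) ->
  m.-integrable setT (EFin \o (fun x => \sum_(i <- s) F i x)).
Proof.
move=> hF.
apply: (eq_integrable measurableT (fun x => \sum_(i <- s) (EFin \o F i) x)) => //.
  by move=> x _ /=; rewrite sumEFin.
by apply: (integrable_sum measurableT) => i _; exact: hF.
Qed.

Lemma Rint_sum (I : Type) (s : seq I) (F : I -> T -> R) :
  (forall i, m.-integrable setT (EFin \o F i)) ->
  Rintegral m setT (fun x => \sum_(i <- s) F i x) = \sum_(i <- s) Rintegral m setT (F i).
Proof.
move=> hF; elim: s => [|i s IH].
  under eq_Rintegral do rewrite big_nil.
  by rewrite Rintegral_cst // mul0r big_nil.
under eq_Rintegral do rewrite big_cons.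
rewrite RintegralD //; last exact: integrable_sumR.
by rewrite IH big_cons.
Qed.

End Gen.
Section Main.
Context (R : realType) (dX : nat -> measure_display)
  (X : forall h : nat, measurableType (dX h)) (A : finType) (H dim : nat)
  (nu : forall h : nat, {measure set (X h) -> \bar R})
  (rho : probability (X 1) R)
  (phi : forall h : nat, X h -> A -> 'I_dim -> R)
  (mu : forall h : nat, X h -> 'I_dim -> R).
Context (Hphim : forall (h : nat) (a : A) (i : 'I_dim), measurable_fun setT (fun x : X h => phi h x a i))
  (Hmum : forall (h : nat) (i : 'I_dim), measurable_fun setT (fun x : X h => mu h x i))
  (Hphin : forall h : nat, (1 <= h < H)%N -> forall (x : X h) (a : A), enorm (phi h x a) <= 1)
  (Hdens : forall h : nat, (1 <= h < H)%N -> forall (x : X h) (a : A),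
      (forall y : X h.+1, 0 <= dotv (mu h.+1 y) (phi h x a)) /\
      (\int[nu h.+1]_(y in setT) (dotv (mu h.+1 y) (phi h x a))%:E = 1)%E)
  (Hmuint : forall h : nat, (2 <= h <= H)%N -> forall g : X h -> R,
      measurable_fun setT g -> (forall x, 0 <= g x <= 1) ->
      (forall i : 'I_dim, (nu h).-integrable setT (fun x => (mu h x i * g x)%:E)) /\
      enorm (fun i : 'I_dim => Rintegral (nu h) setT (fun x => mu h x i * g x))
        <= Num.sqrt (dim%:R)).

Local Notation E := (Eaux nu rho phi mu).
Local Notation P := (Pstep nu phi mu).

Lemma int_mug {h} i {g : X h -> R} {M} : (2 <= h <= H)%N -> measurable_fun setT g ->
  (forall x, `|g x| <= M) -> (nu h).-integrable setT (fun x => (mu h x i * g x)%:E).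
Proof.
move=> hh mg gM.
have c01 : forall x : X h, 0 <= (fun _ => (1:R)) x <= 1 by move=> x; rewrite ler01 lexx.
have [hi _] := Hmuint h hh (fun _ => 1) (measurable_cst (1 : R)) c01.
apply: (le_integrable measurableT _ _ (integrableZl measurableT `|M| (hi i))).
  by apply/measurable_EFinP; apply: measurable_funM.
move=> x _ /=; rewrite lee_fin mulr1 normrM [X in _ <= X]normrM mulrC.
by rewrite normr_id ler_wpM2r // (le_trans (gM x)) // ler_norm.
Qed.

Lemma int_fT {h} (x : X h) a {f : X h.+1 -> R} {M} : (1 <= h < H)%N -> measurable_fun setT f ->
  (forall y, `|f y| <= M) ->
  (nu h.+1).-integrable setT (EFin \o (fun y => f y * trans_dens phi mu h x a y)).
Proof.
move=> hh mf fM.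
have h2 : (2 <= h.+1 <= H)%N by [].
apply: (eq_integrable measurableT (EFin \o (fun y => \sum_i (phi h x a i * (mu h.+1 y i * f y))))).
  move=> y _ /=; congr EFin; rewrite /trans_dens /dotv mulr_sumr; apply: eq_bigr => i _.
  by ring.
apply: integrable_sumR => i.
apply: (eq_integrable measurableT (fun y => ((phi h x a i)%:E * (mu h.+1 y i * f y)%:E)%E)).
  by move=> y _ /=; rewrite EFinM.
exact: integrableZl (int_mug i h2 mf fM).
Qed.

Lemma Rint_fT {h} (x : X h) a {f : X h.+1 -> R} {M} : (1 <= h < H)%N -> measurable_fun setT f ->
  (forall y, `|f y| <= M) ->
  Rintegral (nu h.+1) setT (fun y => f y * trans_dens phi mu h x a y) =
  \sum_i phi h x a i * Rintegral (nu h.+1) setT (fun y => mu h.+1 y i * f y).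
Proof.
move=> hh mf fM.
have h2 : (2 <= h.+1 <= H)%N by [].
have -> : Rintegral (nu h.+1) setT (fun y => f y * trans_dens phi mu h x a y) =
    Rintegral (nu h.+1) setT (fun y => \sum_i (phi h x a i * (mu h.+1 y i * f y))).
  apply: eq_Rintegral => y _ /=; rewrite /trans_dens /dotv mulr_sumr; apply: eq_bigr => i _.
  by ring.
rewrite Rint_sum; last first.
  move=> i; apply: (eq_integrable measurableT (fun y => ((phi h x a i)%:E * (mu h.+1 y i * f y)%:E)%E)).
    by move=> y _ /=; rewrite EFinM.
  exact: integrableZl (int_mug i h2 mf fM).
apply: eq_bigr => i _; rewrite RintegralZl //.
exact: (int_mug i h2 mf fM).
Qed.

Lemma T_int {h} (x : X h) a : (1 <= h < H)%N ->
  (nu h.+1).-integrable setT (EFin \o trans_dens phi mu h x a).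
Proof.
move=> hh.
apply: (eq_integrable measurableT (EFin \o (fun y => 1 * trans_dens phi mu h x a y))).
  by move=> y _ /=; rewrite mul1r.
apply: (int_fT x a hh (measurable_cst (1:R))).
by move=> y; rewrite normr1.
Qed.

Lemma T_Rint {h} (x : X h) a : (1 <= h < H)%N ->
  Rintegral (nu h.+1) setT (trans_dens phi mu h x a) = 1.
Proof. by move=> hh; rewrite /Rintegral /trans_dens (Hdens _ hh x a).2. Qed.

Lemma Rint_fT_bound h (x : X h) a (f : X h.+1 -> R) M : (1 <= h < H)%N ->
  measurable_fun setT f -> 0 <= M -> (forall y, `|f y| <= M) ->
  `|Rintegral (nu h.+1) setT (fun y => f y * trans_dens phi mu h x a y)| <= M.
Proof.
move=> hh mf M0 fM.
have iF := int_fT x a hh mf fM.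
apply: le_trans; first exact: le_normr_Rintegral.
rewrite -[leRHS]mulr1 -(T_Rint x a hh) -RintegralZl //; last exact: T_int.
apply: le_Rintegral => //.
- exact: integrable_norm.
- apply: (eq_integrable measurableT (fun y => (M%:E * (EFin \o trans_dens phi mu h x a) y)%E)).
    by move=> y _ /=; rewrite EFinM.
  exact: integrableZl (T_int x a hh).
- move=> y _ /=; rewrite normrM (ger0_norm ((Hdens _ hh x a).1 y)).
  by rewrite ler_wpM2r // (Hdens _ hh x a).1.
Qed.

Section Pol.
Variable pi : @policy R dX X A.
Hypothesis mp : markov_policy pi.

Lemma pi_ge0 h x b : 0 <= pi h x b.
Proof. by have [h0 _] := mp h; exact: h0. Qed.

Lemma pi_some_le1 h x : \sum_(a : A) pi h x (Some a) <= 1.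
Proof.
have [_ [h1 _]] := mp h; rewrite -(h1 x) sum_option lerDr; exact: pi_ge0.
Qed.

Lemma pi_meas h b : measurable_fun setT (fun x => pi h x b).
Proof. by have [_ [_ h2]] := mp h; exact: h2. Qed.

Lemma P_eq {h} {f : X h.+1 -> R} {M} : (1 <= h < H)%N -> measurable_fun setT f ->
  (forall y, `|f y| <= M) ->
  P pi h f = fun x => \sum_(a : A) pi h x (Some a) *
     \sum_i phi h x a i * Rintegral (nu h.+1) setT (fun y => mu h.+1 y i * f y).
Proof.
move=> hh mf fM; apply/funext => x; rewrite /Pstep; apply: eq_bigr => a _.
by rewrite (Rint_fT x a hh mf fM).
Qed.

Lemma P_meas {h} {f : X h.+1 -> R} {M} : (1 <= h < H)%N -> measurable_fun setT f ->
  (forall y, `|f y| <= M) -> measurable_fun setT (P pi h f).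
Proof.
move=> hh mf fM; rewrite (P_eq hh mf fM).
apply: measurable_sum => a; apply: measurable_funM; first exact: pi_meas.
by apply: measurable_sum => i; apply: measurable_funM.
Qed.

Lemma P_bound {h} {f : X h.+1 -> R} {M} : (1 <= h < H)%N -> measurable_fun setT f ->
  0 <= M -> (forall y, `|f y| <= M) -> forall x, `|P pi h f x| <= M.
Proof.
move=> hh mf M0 fM x; rewrite /Pstep.
apply: le_trans; first exact: ler_norm_sum.
apply: (@le_trans _ _ (\sum_(a : A) pi h x (Some a) * M)).
  apply: ler_sum => a _; rewrite normrM ger0_norm ?pi_ge0 // ler_wpM2l ?pi_ge0 //.
  exact: Rint_fT_bound.
by rewrite -mulr_suml -[leRHS]mul1r ler_wpM2r // pi_some_le1.
Qed.

Lemma P_add {h} {f g : X h.+1 -> R} {Mf Mg} : (1 <= h < H)%N ->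
  measurable_fun setT f -> (forall y, `|f y| <= Mf) ->
  measurable_fun setT g -> (forall y, `|g y| <= Mg) ->
  P pi h (fun y => f y + g y) = fun x => P pi h f x + P pi h g x.
Proof.
move=> hh mf fM mg gM; apply/funext => x; rewrite /Pstep -big_split /=.
apply: eq_bigr => a _; rewrite -mulrDr; congr (_ * _).
rewrite -RintegralD //; [|exact: int_fT mf fM|exact: int_fT mg gM].
by apply: eq_Rintegral => y _; rewrite mulrDl.
Qed.

Lemma P_scale {h} {f : X h.+1 -> R} c {M} : (1 <= h < H)%N ->
  measurable_fun setT f -> (forall y, `|f y| <= M) ->
  P pi h (fun y => c * f y) = fun x => c * P pi h f x.
Proof.
move=> hh mf fM; apply/funext => x; rewrite /Pstep mulr_sumr.
apply: eq_bigr => a _; rewrite mulrCA; congr (_ * _).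
rewrite -RintegralZl //; last exact: int_fT mf fM.
by apply: eq_Rintegral => y _; rewrite mulrA.
Qed.

Lemma P_mono {h} {f g : X h.+1 -> R} {Mf Mg} : (1 <= h < H)%N ->
  measurable_fun setT f -> (forall y, `|f y| <= Mf) ->
  measurable_fun setT g -> (forall y, `|g y| <= Mg) ->
  (forall y, f y <= g y) -> forall x, P pi h f x <= P pi h g x.
Proof.
move=> hh mf fM mg gM fg x; rewrite /Pstep; apply: ler_sum => a _.
rewrite ler_wpM2l ?pi_ge0 //; apply: le_Rintegral => //;
  [exact: int_fT mf fM|exact: int_fT mg gM|].
move=> y _; rewrite ler_wpM2r // ?fg //; exact: (Hdens _ hh x a).1.
Qed.

Definition good {h} (f : X h -> R) :=
  measurable_fun setT f /\ exists2 M, 0 <= M & forall x, `|f x| <= M.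

Lemma good_add {h} (f g : X h -> R) : good f -> good g -> good (fun x => f x + g x).
Proof.
move=> [mf [Mf Mf0 fM]] [mg [Mg Mg0 gM]]; split; first exact: measurable_funD.
exists (Mf + Mg); first exact: addr_ge0.
by move=> x; apply: le_trans (ler_normD _ _) _; exact: lerD.
Qed.

Lemma good_scale {h} (f : X h -> R) c : good f -> good (fun x => c * f x).
Proof.
move=> [mf [Mf Mf0 fM]]; split; first by apply: measurable_funM => //; exact: measurable_cst.
exists (`|c| * Mf); first exact: mulr_ge0.
by move=> x; rewrite normrM ler_wpM2l.
Qed.

Lemma good_cst {h} c : good (fun _ : X h => c).
Proof. by split; [exact: measurable_cst|exists `|c| => //]. Qed.

Lemma good_sum {h} (I : Type) (s : seq I) (F : I -> X h -> R) :
  (forall i, good (F i)) -> good (fun x => \sum_(i <- s) F i x).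
Proof.
move=> gF; elim: s => [|i s IH].
  by apply: (@eq_ind _ (fun _ => 0)); [exact: good_cst|apply/funext => x; rewrite big_nil].
apply: (@eq_ind _ (fun x => F i x + \sum_(j <- s) F j x)); first exact: good_add.
by apply/funext => x; rewrite big_cons.
Qed.

Lemma good_mul {h} (f g : X h -> R) : good f -> good g -> good (fun x => f x * g x).
Proof.
move=> [mf [Mf Mf0 fM]] [mg [Mg Mg0 gM]]; split; first exact: measurable_funM.
exists (Mf * Mg); first exact: mulr_ge0.
by move=> x; rewrite normrM ler_pM.
Qed.

Lemma int_rho {f : X 1 -> R} : good f -> rho.-integrable setT (EFin \o f).
Proof.
move=> [mf [M M0 fM]].
apply: (le_integrable measurableT _ _ (finite_measure_integrable_cst rho M measurableT)).
  exact/measurable_EFinP.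
by move=> x _ /=; rewrite lee_fin (ger0_norm M0).
Qed.

Lemma P_good {h} {f : X h.+1 -> R} : (1 <= h < H)%N -> good f -> good (P pi h f).
Proof.
move=> hh [mf [M M0 fM]]; split; first exact: P_meas hh mf fM.
by exists M => //; exact: P_bound.
Qed.

Lemma E_bound k (f : X k.+1 -> R) M : (k < H)%N -> measurable_fun setT f -> 0 <= M ->
  (forall x, `|f x| <= M) -> `|E pi k f| <= M.
Proof.
elim: k f => [|k IH] f kH mf M0 fM /=.
  have gf : good f by split => //; exists M.
  apply: le_trans; first exact: (le_normr_Rintegral measurableT (int_rho gf)).
  apply: le_trans (@le_Rintegral _ _ _ rho setT _ (fun _ => M) measurableT _ _ _) _.
  - exact: integrable_norm (int_rho gf).
  - exact: int_rho (good_cst M).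
  - by move=> x _; exact: fM.
  rewrite Rintegral_cst //.
  have e : forall t : \bar R, t = 1%E -> M * fine t <= M by move=> t ->; rewrite mulr1.
  by apply: e; exact: probability_setT.
have hh : (1 <= k.+1 < H)%N by rewrite /= kH.
apply: IH; first exact: ltnW.
- exact: P_meas hh mf fM.
- exact: M0.
- exact: P_bound.
Qed.

Lemma E_add k (f g : X k.+1 -> R) : (k < H)%N -> good f -> good g ->
  E pi k (fun x => f x + g x) = E pi k f + E pi k g.
Proof.
elim: k f g => [|k IH] f g kH gf gg /=.
  by apply: RintegralD => //; exact: int_rho.
have hh : (1 <= k.+1 < H)%N by rewrite /= kH.
have [mf [Mf _ fM]] := gf; have [mg [Mg _ gM]] := gg.
rewrite (P_add hh mf fM mg gM) IH //; [exact: ltnW|exact: P_good|exact: P_good].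
Qed.

Lemma E_scale k (f : X k.+1 -> R) c : (k < H)%N -> good f ->
  E pi k (fun x => c * f x) = c * E pi k f.
Proof.
elim: k f => [|k IH] f kH gf /=.
  by apply: RintegralZl => //; exact: int_rho.
have hh : (1 <= k.+1 < H)%N by rewrite /= kH.
have [mf [Mf _ fM]] := gf.
rewrite (P_scale c hh mf fM) IH //; [exact: ltnW|exact: P_good].
Qed.

Lemma E_mono k (f g : X k.+1 -> R) : (k < H)%N -> good f -> good g ->
  (forall x, f x <= g x) -> E pi k f <= E pi k g.
Proof.
elim: k f g => [|k IH] f g kH gf gg fg /=.
  by apply: le_Rintegral => //; exact: int_rho.
have hh : (1 <= k.+1 < H)%N by rewrite /= kH.
have [mf [Mf _ fM]] := gf; have [mg [Mg _ gM]] := gg.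
apply: IH; [exact: ltnW|exact: P_good|exact: P_good|].
exact: P_mono hh mf fM mg gM fg.
Qed.

Lemma E_sum k (I : Type) (s : seq I) (F : I -> X k.+1 -> R) : (k < H)%N ->
  (forall i, good (F i)) ->
  E pi k (fun x => \sum_(i <- s) F i x) = \sum_(i <- s) E pi k (F i).
Proof.
move=> kH gF; elim: s => [|i s IH].
  rewrite big_nil; have -> : (fun x : X k.+1 => \sum_(i <- [::]) F i x) = (fun x => 0 * 0).
    by apply/funext => x; rewrite big_nil mul0r.
  by rewrite E_scale ?mul0r //; exact: good_cst.
rewrite big_cons -IH -E_add //; last exact: good_sum.
by congr (E pi k); apply/funext => x; rewrite big_cons.
Qed.

End Pol.

Lemma E_ext (pi pi' : @policy R dX X A) k (f : X k.+1 -> R) :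
  (forall t, (t <= k)%N -> pi t = pi' t) -> E pi k f = E pi' k f.
Proof.
elim: k f => [|k IH] f Hpi //=.
rewrite (IH _ (fun t tk => Hpi t (leqW tk))); congr (Eaux _ _ _ _ _ _).
by apply/funext => x; rewrite /Pstep (Hpi k.+1 (leqnn _)).
Qed.

Definition gr (pi : @policy R dX X A) (r : forall h, X h -> A -> R) k (x : X k.+1) :=
  \sum_(a : A) pi k.+1 x (Some a) * r k.+1 x a.

Lemma value_eq (pi : @policy R dX X A) r :
  value nu rho phi mu H r pi = \sum_(k < H) E pi k (gr pi r k).
Proof.
rewrite /value big_add1 /= big_mkord; apply: eq_bigr => k _ //.
Qed.

Context (r : forall h : nat, X h -> A -> R) (B : nat -> R)
  (HB : forall h : nat, (1 <= h <= H)%N -> 0 < B h)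
  (Hrm : forall (h : nat) (a : A), measurable_fun setT (fun x : X h => r h x a))
  (Hrb : forall h : nat, (1 <= h <= H)%N -> forall (x : X h) (a : A), `|r h x a| <= B h).

Lemma gr_bound pi k : markov_policy pi -> (k < H)%N -> forall x, `|gr pi r k x| <= B k.+1.
Proof.
move=> mp kH x; rewrite /gr; apply: le_trans; first exact: ler_norm_sum.
apply: (@le_trans _ _ (\sum_(a : A) pi k.+1 x (Some a) * B k.+1)).
  apply: ler_sum => a _; rewrite normrM ger0_norm ?(pi_ge0 _ mp) // ler_wpM2l ?(pi_ge0 _ mp) //.
  exact: Hrb.
rewrite -mulr_suml -[leRHS]mul1r ler_wpM2r ?(pi_some_le1 _ mp) //.
by apply: ltW; apply: HB.
Qed.

Lemma gr_good pi k : markov_policy pi -> (k < H)%N -> good (gr pi r k).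
Proof.
move=> mp kH; split.
  by apply: measurable_sum => a; apply: measurable_funM; [exact: (pi_meas _ mp)|exact: Hrm].
exists (B k.+1); first by apply: ltW; apply: HB.
exact: gr_bound.
Qed.

Lemma good_indic {h} (S : set (X h)) : measurable S -> good (\1_S : X h -> R).
Proof.
move=> mS; split; first exact: measurable_indic.
by exists 1 => // x; rewrite indicE; case: (x \in S); rewrite ?normr1 ?normr0.
Qed.

Lemma indicCE {h} (S : set (X h)) x : (\1_(~` S) x : R) = 1 - \1_S x.
Proof.
rewrite !indicE; case: (boolP (x \in S)) => xS.
  by rewrite (_ : x \in ~` S = false) ?subrr //; apply/negbTE; rewrite in_setC xS.
by rewrite (_ : x \in ~` S = true) ?subr0 //; rewrite in_setC xS.
Qed.

Section Step.
Variables (pi pi' : @policy R dX X A) (j : nat) (S : set (X j.+1)).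
Hypotheses (mp : markov_policy pi) (jH : (j < H)%N) (mS : measurable S)
  (Hoth : forall t, t <> j.+1 -> pi' t = pi t)
  (HS : forall x, S x -> pi' j.+1 x = pi j.+1 x)
  (HnS : forall x, ~ S x -> pi' j.+1 x = term_act).

Let e := E pi j (\1_(~` S) : X j.+1 -> R).

Lemma e_ge0 : 0 <= e.
Proof.
have -> : 0 = E pi j (fun _ => 0 * 0).
  by rewrite E_scale ?mul0r //; exact: good_cst.
apply: E_mono => //; [exact: good_cst|exact: good_indic (measurableC mS)|].
by move=> x; rewrite mul0r indicE ler0n.
Qed.

Lemma Elow (F : X j.+1 -> R) : (forall t, (t <= j)%N -> pi' t = pi t) ->
  E pi' j F = E pi j F.
Proof. by move=> h; apply: E_ext. Qed.

Lemma low_eq : forall t, (t <= j)%N -> pi' t = pi t.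
Proof. by move=> t tj; apply: Hoth => tj1; move: tj; rewrite tj1 ltnn. Qed.

Lemma cut (F : X j.+1 -> R) M : good F -> 0 <= M -> (forall x, `|F x| <= M) ->
  `|E pi j F - E pi j (fun x => \1_S x * F x)| <= M * e.
Proof.
move=> gF M0 FM.
have gSF : good (fun x => \1_S x * F x) by apply: good_mul => //; exact: good_indic.
have gC : good (\1_(~` S) : X j.+1 -> R) by exact: good_indic (measurableC mS).
have -> : E pi j F - E pi j (fun x => \1_S x * F x) = E pi j (fun x => \1_(~` S) x * F x).
  rewrite -mulN1r -E_scale // -E_add //; last exact: good_scale.
  by congr (E pi j); apply/funext => x; rewrite indicCE; ring.
have gCF : good (fun x => \1_(~` S) x * F x) by exact: good_mul.
rewrite ler_norml; apply/andP; split.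
  rewrite -mulNr /e -E_scale //; apply: E_mono => //; first exact: good_scale.
  move=> x; rewrite indicE; case: (x \in ~` S); rewrite ?mul1r ?mulr1 ?mul0r ?mulr0 //.
  by rewrite lerNl; apply: le_trans (FM x); rewrite -normrN ler_norm.
rewrite /e -E_scale //; apply: E_mono => //; first exact: good_scale.
move=> x; rewrite indicE; case: (x \in ~` S); rewrite ?mul1r ?mulr1 ?mul0r ?mulr0 //.
by apply: le_trans (FM x); exact: ler_norm.
Qed.

Lemma Pcut (f : X j.+2 -> R) : (j.+1 < H)%N -> good f ->
  P pi' j.+1 f = fun x => \1_S x * P pi j.+1 f x.
Proof.
move=> jH1 gf; apply/funext => x; rewrite /Pstep indicE.
case: (boolP (x \in S)) => xS.
  by rewrite HS ?mul1r //; exact: set_mem.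
rewrite HnS ?mul0r; last by move=> Sx; move: xS; rewrite (mem_set Sx).
by apply: big1 => a _; rewrite /term_act mul0r.
Qed.

Lemma tail k : (j < k)%N -> (k < H)%N -> forall (f : X k.+1 -> R) M, good f -> 0 <= M ->
  (forall x, `|f x| <= M) -> `|E pi k f - E pi' k f| <= M * e.
Proof.
elim: k => [//|k IH] jk kH f M gf M0 fM /=.
have hh : (1 <= k.+1 < H)%N by rewrite /= kH.
have [mf _] := gf.
have gPf : good (P pi k.+1 f) by exact: P_good.
have PfM : forall x, `|P pi k.+1 f x| <= M by exact: P_bound.
case: (eqVneq j k) => [ejk|njk].
  subst k.
  rewrite (Pcut _ kH gf) Elow; last exact: low_eq.
  exact: cut.
have jk' : (j < k)%N by rewrite ltn_neqAle njk -ltnS.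
rewrite (_ : P pi' k.+1 f = P pi k.+1 f); last first.
  by rewrite /Pstep (Hoth k.+1) // => -[] ejk; move: njk; rewrite ejk eqxx.
by apply: IH => //; exact: ltnW.
Qed.

Lemma gr_cut : gr pi' r j = fun x => \1_S x * gr pi r j x.
Proof.
apply/funext => x; rewrite /gr indicE.
case: (boolP (x \in S)) => xS.
  by rewrite HS ?mul1r //; exact: set_mem.
rewrite HnS ?mul0r; last by move=> Sx; move: xS; rewrite (mem_set Sx).
by apply: big1 => a _; rewrite /term_act mul0r.
Qed.

Lemma term_diff k : (k < H)%N ->
  `|E pi k (gr pi r k) - E pi' k (gr pi' r k)| <= B k.+1 * e.
Proof.
move=> kH.
have B0 : 0 <= B k.+1 by apply: ltW; apply: HB.
have ggr := gr_good _ _ mp kH.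
case: (ltngtP k j) => [kj|jk|ekj].
- rewrite (_ : gr pi' r k = gr pi r k); last first.
    by rewrite /gr (Hoth k.+1) // => /succn_inj ekj; lia.
  rewrite (@E_ext pi' pi); last first.
    by move=> t tk; apply: Hoth => etj; lia.
  by rewrite subrr normr0; apply: mulr_ge0 => //; exact: e_ge0.
- rewrite (_ : gr pi' r k = gr pi r k); last first.
    by rewrite /gr (Hoth k.+1) // => /succn_inj ekj; lia.
  apply: tail => //; exact: (gr_bound _ _ mp).
- subst k; rewrite gr_cut Elow; last exact: low_eq.
  apply: cut => //; exact: (gr_bound _ _ mp).
Qed.

Lemma trunc_step :
  value nu rho phi mu H r pi - (\sum_(k < H) B k.+1) * e <= value nu rho phi mu H r pi'.
Proof.
rewrite !value_eq.
suff h : \sum_(k < H) E pi k (gr pi r k) - \sum_(k < H) E pi' k (gr pi' r k) <=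
    (\sum_(k < H) B k.+1) * e by lra.
rewrite -sumrB mulr_suml.
apply: ler_sum => k _; apply: le_trans (ler_norm _) _.
exact: term_diff (ltn_ord k).
Qed.

End Step.

Lemma abs_mu_int h c : (2 <= h <= H)%N ->
  Rintegral (nu h) setT (fun x => `|mu h x c|) <= 2 * Num.sqrt dim%:R.
Proof.
move=> hh.
pose G := (fun x => mu h x c) @^-1` [set` `[(0:R), +oo[%R].
have mG : measurable G.
  by have := Hmum h c measurableT _ (measurable_itv `[(0:R), +oo[%R); rewrite setTI.
have GE x : (x \in G) = (0 <= mu h x c).
  apply/idP/idP => [/set_mem|h0].
    by rewrite /G /preimage /= in_itv /= andbT.
  by apply/mem_set; rewrite /G /preimage /= in_itv /= andbT.
have mu1 : measurable_fun setT (\1_G : X h -> R) by exact: measurable_indic.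
have mu2 : measurable_fun setT (\1_(~` G) : X h -> R) by exact: measurable_indic (measurableC mG).
have b1 : forall x, `|(\1_G : X h -> R) x| <= 1.
  by move=> x; rewrite indicE; case: (x \in G); rewrite ?normr1 ?normr0.
have b2 : forall x, `|(\1_(~` G) : X h -> R) x| <= 1.
  by move=> x; rewrite indicE; case: (x \in ~` G); rewrite ?normr1 ?normr0.
have r1 : forall x, 0 <= (\1_G : X h -> R) x <= 1.
  by move=> x; rewrite indicE; case: (x \in G); rewrite ?ler01 ?lexx.
have r2 : forall x, 0 <= (\1_(~` G) : X h -> R) x <= 1.
  by move=> x; rewrite indicE; case: (x \in ~` G); rewrite ?ler01 ?lexx.
have -> : Rintegral (nu h) setT (fun x => `|mu h x c|) =
  Rintegral (nu h) setT (fun x => mu h x c * \1_G x) -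
  Rintegral (nu h) setT (fun x => mu h x c * \1_(~` G) x).
  rewrite -RintegralB //; [|exact: (@int_mug h c (\1_G) 1 hh mu1 b1)|exact: (@int_mug h c (\1_(~` G)) 1 hh mu2 b2)].
  apply: eq_Rintegral => x _; rewrite indicCE indicE GE.
  case: (lerP 0 (mu h x c)) => m0 /=.
    by rewrite ger0_norm //; ring.
  by rewrite ltr0_norm //; ring.
have B1 : `|Rintegral (nu h) setT (fun x => mu h x c * \1_G x)| <= Num.sqrt dim%:R.
  have [_ hn] := Hmuint h hh _ mu1 r1.
  apply: le_trans hn.
  exact: (comp_le_enorm _ _ (fun i => Rintegral (nu h) setT (fun x => mu h x i * \1_G x)) c).
have B2 : `|Rintegral (nu h) setT (fun x => mu h x c * \1_(~` G) x)| <= Num.sqrt dim%:R.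
  have [_ hn] := Hmuint h hh _ mu2 r2.
  apply: le_trans hn.
  exact: (comp_le_enorm _ _ (fun i => Rintegral (nu h) setT (fun x => mu h x i * \1_(~` G) x)) c).
move: B1 B2; set a := Rintegral _ _ _; set b := Rintegral _ _ _.
rewrite !ler_norml => /andP[B1 B1'] /andP[B2 B2']; lra.
Qed.

Lemma e_bound (eta : R) (i : nat) pi (S : set (X i.+2)) : (i.+2 <= H)%N ->
  markov_policy pi -> measurable S -> 0 <= eta ->
  (forall x, ~ S x -> occ_dens nu rho phi mu pi i x < eta * enorm (mu i.+2 x)) ->
  E pi i.+1 (\1_(~` S)) <= eta * (dim%:R * (2 * Num.sqrt dim%:R)).
Proof.
move=> iH mp mS eta0 Hocc.
have hh : (1 <= i.+1 < H)%N by [].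
have h2 : (2 <= i.+2 <= H)%N by [].
have iH' : (i < H)%N by apply: ltn_trans iH.
pose f := (\1_(~` S) : X i.+2 -> R).
have mf : measurable_fun setT f by exact: measurable_indic (measurableC mS).
have fM : forall x, `|f x| <= 1.
  by move=> x; rewrite /f indicE; case: (x \in ~` S); rewrite ?normr1 ?normr0.
pose C c := Rintegral (nu i.+2) setT (fun y => mu i.+2 y c * f y).
pose w c (y : X i.+1) := \sum_(a : A) pi i.+1 y (Some a) * phi i.+1 y a c.
have gw : forall c, good (w c).
  move=> c; split.
    by apply: measurable_sum => a; apply: measurable_funM; [exact: (pi_meas _ mp)|exact: Hphim].
  exists 1 => // y; rewrite /w; apply: le_trans; first exact: ler_norm_sum.
  apply: le_trans (pi_some_le1 _ mp i.+1 y); apply: ler_sum => a _.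
  rewrite normrM ger0_norm ?(pi_ge0 _ mp) // -[leRHS]mulr1 ler_wpM2l ?(pi_ge0 _ mp) //.
  exact: le_trans (comp_le_enorm _ _ _ c) (Hphin _ hh y a).
have -> : E pi i.+1 f = \sum_c C c * E pi i (w c).
  rewrite /= (P_eq pi hh mf fM).
  rewrite (_ : (fun x => _) = fun x => \sum_c C c * w c x); last first.
    apply/funext => y; rewrite /w /C.
    under eq_bigr do rewrite mulr_sumr.
    rewrite exchange_big /=; apply: eq_bigr => c _.
    by rewrite mulr_sumr; apply: eq_bigr => a _; ring.
  rewrite E_sum //; last by move=> c; exact: good_scale.
  by apply: eq_bigr => c _; rewrite E_scale.
have int_c : forall c, (nu i.+2).-integrable setT (EFin \o (fun y => mu i.+2 y c * f y)).
  by move=> c; exact: (@int_mug i.+2 c f 1 h2 mf fM).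
have int_abs : forall c, (nu i.+2).-integrable setT (EFin \o (fun y => `|mu i.+2 y c|)).
  move=> c.
  have i1 := @int_mug i.+2 c (fun _ => 1) 1 h2 (measurable_cst _) (fun _ => ltac:(by rewrite normr1)).
  have i2 := integrable_norm i1.
  apply: (eq_integrable measurableT _ _ _ i2) => y _ /=.
  by rewrite mulr1.
pose v c := E pi i (w c).
have -> : \sum_c C c * v c =
    Rintegral (nu i.+2) setT (fun y => \sum_c v c * (mu i.+2 y c * f y)).
  rewrite Rint_sum; last first.
    move=> c; apply: (eq_integrable measurableT (fun y => ((v c)%:E * (mu i.+2 y c * f y)%:E)%E)).
      by move=> y _ /=; rewrite EFinM.
    exact: integrableZl (int_c c).
  apply: eq_bigr => c _; rewrite RintegralZl //; first by rewrite mulrC.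
have int_l : (nu i.+2).-integrable setT (EFin \o (fun y => \sum_c v c * (mu i.+2 y c * f y))).
  apply: integrable_sumR => c.
  apply: (eq_integrable measurableT (fun y => ((v c)%:E * (mu i.+2 y c * f y)%:E)%E)).
    by move=> y _ /=; rewrite EFinM.
  exact: integrableZl (int_c c).
have int_r : (nu i.+2).-integrable setT (EFin \o (fun y => eta * \sum_c `|mu i.+2 y c|)).
  have i3 := integrableZl measurableT eta (@integrable_sumR _ _ _ _ _ (index_enum 'I_dim) _ int_abs).
  apply: (eq_integrable measurableT _ _ _ i3) => y _ /=.
  by rewrite EFinM.
apply: le_trans (le_Rintegral measurableT int_l int_r _) _.
  move=> y _.
  have -> : \sum_c v c * (mu i.+2 y c * f y) = f y * occ_dens nu rho phi mu pi i y.
    rewrite /occ_dens /dotv mulr_sumr; apply: eq_bigr => c _; rewrite /v /w; ring.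
  rewrite /f indicE; case: (boolP (y \in ~` S)) => yS.
    rewrite mul1r; apply/ltW; apply: lt_le_trans (Hocc y _) _.
      by move=> Sy; move: yS; rewrite in_setC (mem_set Sy).
    by rewrite ler_wpM2l //; exact: enorm_le_l1.
  rewrite mul0r; apply: mulr_ge0 => //; exact: sumr_ge0.
rewrite RintegralZl //; last by apply: integrable_sumR.
rewrite Rint_sum //; apply: ler_wpM2l => //.
apply: (@le_trans _ _ (\sum_(c < dim) 2 * Num.sqrt dim%:R)).
  by apply: ler_sum => c _; exact: abs_mu_int.
by rewrite sumr_const card_ord [in leRHS]mulrC mulr_natr.
Qed.

Lemma markov_mod (pi pi' : @policy R dX X A) m (S : set (X m)) :
  markov_policy pi' -> measurable S -> (forall t, t <> m -> pi t = pi' t) ->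
  (forall x, S x -> pi m x = pi' m x) -> (forall x, ~ S x -> pi m x = term_act) ->
  markov_policy pi.
Proof.
move=> mp' mS Ho HS HnS t.
case: (eqVneq t m) => [etm|ntm]; last first.
  rewrite (Ho t); first exact: mp'.
  by move=> etm; move: ntm; rewrite etm eqxx.
subst t; split; [|split].
- move=> x b; have [Sx|nSx] := pselect (S x).
    by rewrite HS //; exact: pi_ge0.
  by rewrite HnS //; case: b => [a|]; rewrite /term_act ?ler01 ?lexx.
- move=> x; have [Sx|nSx] := pselect (S x).
    by rewrite HS //; have [_ [h1 _]] := mp' m; exact: h1.
  rewrite HnS // sum_option /term_act big1 ?addr0 //.
- move=> b.
  rewrite (_ : (fun x => pi m x b) =
      fun x => \1_S x * pi' m x b + (1 - \1_S x) * term_act b); last first.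
    apply/funext => x; rewrite indicE; case: (boolP (x \in S)) => xS.
      by rewrite HS ?mul1r ?subrr ?mul0r ?addr0 //; exact: set_mem.
    rewrite HnS ?mul0r ?add0r ?subr0 ?mul1r //.
    by move=> Sx; move: xS; rewrite (mem_set Sx).
  apply: measurable_funD; apply: measurable_funM.
  + exact: measurable_indic.
  + exact: pi_meas.
  + apply: measurable_funB; [exact: measurable_cst|exact: measurable_indic].
  + exact: measurable_cst.
Qed.

Lemma term_markov : markov_policy (fun (h : nat) (x : X h) => @term_act R A).
Proof.
move=> h; split; [|split].
- by move=> x [a|]; rewrite /term_act ?ler01 ?lexx.
- by move=> x; rewrite sum_option /term_act big1 ?addr0.
- by move=> b; exact: measurable_cst.
Qed.

Lemma value_bound pi : markov_policy pi ->
  `|value nu rho phi mu H r pi| <= \sum_(k < H) B k.+1.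
Proof.
move=> mp; rewrite value_eq; apply: le_trans; first exact: ler_norm_sum.
apply: ler_sum => k _.
have kH := ltn_ord k.
have [mg _] := gr_good _ _ mp kH.
apply: E_bound => //; first by apply: ltW; apply: HB.
exact: gr_bound.
Qed.

Section Eta.
Variable eta : R.
Hypothesis eta0 : 0 <= eta.
Hypothesis Hreach : forall h : nat, (2 <= h <= H)%N ->
      measurable (reachable nu rho phi mu eta (trunc_class nu rho phi mu eta h.-1) h).

Local Notation TC := (trunc_class nu rho phi mu eta).
Local Notation RE := (reachable nu rho phi mu eta).

Lemma reach_meas n : (n < H)%N -> measurable (RE (TC n) n.+1).
Proof. by case: n => [|n] nH; [exact: measurableT | apply: Hreach]. Qed.

Lemma trunc_markov n pi : (n <= H)%N -> TC n pi -> markov_policy pi.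
Proof.
elim: n pi => [//|n IH] pi nH [pin tn [Ho HSx]].
apply: (markov_mod pi pin n.+1 _ (IH pin (ltnW nH) tn) (reach_meas _ nH) Ho).
- by move=> x Sx; exact: (HSx x).1.
- by move=> x nSx; exact: (HSx x).2.
Qed.

Let K := eta * (dim%:R * (2 * Num.sqrt dim%:R)).

Lemma K_ge0 : 0 <= K.
Proof. by apply: mulr_ge0 => //; apply: mulr_ge0 => //; apply: mulr_ge0. Qed.

Lemma e_step n pin : (n < H)%N -> markov_policy pin -> TC n pin ->
  E pin n (\1_(~` RE (TC n) n.+1)) <= K.
Proof.
case: n => [|i] nH mp tn.
  have -> : (\1_(~` RE (TC 0) 1) : X 1 -> R) = fun _ => 0 * 0.
    apply/funext => x; rewrite indicE mul0r.
    by rewrite (_ : x \in ~` _ = false) // in_setC; apply/negbF; apply/mem_set.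
  by rewrite E_scale ?mul0r //; [exact: K_ge0|exact: good_cst].
apply: e_bound => //; first exact: reach_meas _ nH.
move=> x nSx; rewrite ltNge; apply/negP => hle; apply: nSx.
by exists pin.
Qed.

Let L := (\sum_(k < H) B k.+1) * K.

Lemma construct pi0 : markov_policy pi0 -> forall n, (n <= H)%N ->
  exists pin, [/\ TC n pin, markov_policy pin &
                 value nu rho phi mu H r pi0 - n%:R * L <= value nu rho phi mu H r pin].
Proof.
move=> mp0; elim => [|n IH] nH.
  by exists pi0; split => //; rewrite mul0r subr0.
have [pin [tn mn vn]] := IH (ltnW nH).
pose Sf := fun t => RE (TC n) t.
pose pi' : @policy R dX X A := fun t x b =>
  if (t == n.+1) && ~~ `[< Sf t x >] then term_act b else pin t x b.
have Ho : forall t, t <> n.+1 -> pi' t = pin t.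
  move=> t tn1; apply/funext => x; apply/funext => b.
  by rewrite /pi' (_ : (t == n.+1) = false) //; apply/eqP.
have HS : forall x, Sf n.+1 x -> pi' n.+1 x = pin n.+1 x.
  by move=> x Sx; apply/funext => b; rewrite /pi' eqxx (asboolT Sx).
have HnS : forall x, ~ Sf n.+1 x -> pi' n.+1 x = term_act.
  by move=> x Sx; apply/funext => b; rewrite /pi' eqxx (asboolF Sx).
have mS := reach_meas _ nH.
exists pi'; split.
- by exists pin => //; split => // x; split; [exact: HS|exact: HnS].
- exact: (markov_mod pi' pin n.+1 _ mn mS Ho HS HnS).
- have hstep := trunc_step _ _ _ _ mn nH mS Ho HS HnS.
  have he := e_step _ _ nH mn tn.
  have SB0 : 0 <= \sum_(k < H) B k.+1.
    by apply: sumr_ge0 => k _; apply: ltW; apply: HB; rewrite /= ltn_ord.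
  have hm := ler_wpM2l SB0 he.
  rewrite /L in vn *; rewrite -natr1 mulrDl mul1r.
  lra.
Qed.

End Eta.

Lemma main_ineq (eta : R) : 0 < eta < 1 ->
  (forall h : nat, (2 <= h <= H)%N ->
      measurable (reachable nu rho phi mu eta (trunc_class nu rho phi mu eta h.-1) h)) ->
  sup [set value nu rho phi mu H r pi | pi in trunc_class nu rho phi mu eta H]
  >= sup [set value nu rho phi mu H r pi | pi in markov_policy]
     - 2 * H%:R * (dim%:R `^ (3 / 2)) * eta * \sum_(1 <= h < H.+1) B h.
Proof.
move=> /andP[etap _] Hre; have eta0 := ltW etap.
have SBe : \sum_(1 <= h < H.+1) B h = \sum_(k < H) B k.+1 by rewrite big_add1 big_mkord.
have pw : dim%:R `^ (3 / 2) = dim%:R * Num.sqrt (dim%:R : R).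
  rewrite (_ : 3 / 2 = 1 + 2^-1); last by field.
  rewrite powRD; first by rewrite powRr1 // powR12_sqrt.
  by apply/implyP => /eqP h0; exfalso; lra.
have ub : forall pi, markov_policy pi -> value nu rho phi mu H r pi <= \sum_(k < H) B k.+1.
  by move=> pi mp; apply: le_trans (ler_norm _) (value_bound _ mp).
have [p0 [t0 _ _]] := construct _ eta0 Hre _ term_markov _ (leqnn H).
have hs : has_sup [set value nu rho phi mu H r pi | pi in trunc_class nu rho phi mu eta H].
  split; first by exists (value nu rho phi mu H r p0); exists p0.
  exists (\sum_(k < H) B k.+1) => y [pi tpi <-].
  by apply: ub; exact: (trunc_markov _ Hre _ _ (leqnn H) tpi).
set St := sup [set value nu rho phi mu H r pi | pi in trunc_class nu rho phi mu eta H].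
set Sm := sup [set value nu rho phi mu H r pi | pi in markov_policy].
have hm : Sm <= St + H%:R * ((\sum_(k < H) B k.+1) *
                   (eta * (dim%:R * (2 * Num.sqrt dim%:R)))).
  apply: ge_sup.
    exists (value nu rho phi mu H r (fun (h : nat) (x : X h) => @term_act R A)).
    by exists (fun (h : nat) (x : X h) => @term_act R A); first exact: term_markov.
  move=> y [pi mp <-].
  have [pin [tn _ vn]] := construct _ eta0 Hre _ mp _ (leqnn H).
  have hup : value nu rho phi mu H r pin <= St.
    by rewrite /St; apply: (sup_upper_bound hs); exists pin.
  lra.
rewrite SBe pw.
have -> : 2 * H%:R * (dim%:R * Num.sqrt dim%:R) * eta * \sum_(k < H) B k.+1 =
  H%:R * ((\sum_(k < H) B k.+1) * (eta * (dim%:R * (2 * Num.sqrt dim%:R)))) by ring.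
lra.
Qed.

End Main.
Theorem mainTheorem13 (R : realType) (dX : nat -> measure_display)
  (X : forall h : nat, measurableType (dX h)) (A : finType) (H dim : nat)
  (nu : forall h : nat, {measure set (X h) -> \bar R})
  (rho : probability (X 1) R)
  (phi : forall h : nat, X h -> A -> 'I_dim -> R)
  (mu : forall h : nat, X h -> 'I_dim -> R)
  (eta : R) (B : nat -> R) (r : forall h : nat, X h -> A -> R) :
  (* nu is sigma-finite (on every layer) *)
  (forall h : nat, sigma_finite setT (nu h)) ->
  (* measurability of the features *)
  (forall (h : nat) (a : A) (i : 'I_dim), measurable_fun setT (fun x : X h => phi h x a i)) ->
  (forall (h : nat) (i : 'I_dim), measurable_fun setT (fun x : X h => mu h x i)) ->
  (* ||phi*_h(x,a)|| <= 1 *)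
  (forall h : nat, (1 <= h < H)%N -> forall (x : X h) (a : A), enorm (phi h x a) <= 1) ->
  (* x' |-> mu*_{h+1}(x')^T phi*_h(x,a) is a probability density w.r.t. nu *)
  (forall h : nat, (1 <= h < H)%N -> forall (x : X h) (a : A),
      (forall y : X h.+1, 0 <= dotv (mu h.+1 y) (phi h x a)) /\
      (\int[nu h.+1]_(y in setT) (dotv (mu h.+1 y) (phi h x a))%:E = 1)%E) ->
  (* || \int mu*_h g dnu || <= sqrt d for every measurable g : X_h -> [0,1] *)
  (forall h : nat, (2 <= h <= H)%N -> forall g : X h -> R,
      measurable_fun setT g -> (forall x, 0 <= g x <= 1) ->
      (forall i : 'I_dim, (nu h).-integrable setT (fun x => (mu h x i * g x)%:E)) /\
      enorm (fun i : 'I_dim => Rintegral (nu h) setT (fun x => mu h x i * g x))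
        <= Num.sqrt (dim%:R)) ->
  (* eta in (0,1), B_h > 0, r_h : X_h x A -> [-B_h, B_h] (measurable) *)
  0 < eta < 1 ->
  (forall h : nat, (1 <= h <= H)%N -> 0 < B h) ->
  (forall (h : nat) (a : A), measurable_fun setT (fun x : X h => r h x a)) ->
  (forall h : nat, (1 <= h <= H)%N -> forall (x : X h) (a : A), `|r h x a| <= B h) ->
  (* technical: the reachable sets used in the truncation are measurable *)
  (forall h : nat, (2 <= h <= H)%N ->
      measurable (reachable nu rho phi mu eta (trunc_class nu rho phi mu eta h.-1) h)) ->
  sup [set value nu rho phi mu H r pi | pi in trunc_class nu rho phi mu eta H]
  >= sup [set value nu rho phi mu H r pi | pi in markov_policy]
     - 2 * H%:R * (dim%:R `^ (3 / 2)) * eta * \sum_(1 <= h < H.+1) B h.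
Proof.
move=> _ Hphim Hmum Hphin Hdens Hmuint Heta HB Hrm Hrb Hre.
by apply: main_ineq.
Qed.
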